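(* Let $S$ be the group defined in the context. The subgroup $\langle v_1v_3\rangle$ is cyclic of order $4$ and is normal in $S$. Moreover, $S/\langle v_1v_3\rangle\cong \mathbb{Z}/2\wr\mathbb{Z}/2\wr\mathbb{Z}/2$.
   Context: Let $S$ be the group generated by $v_1,v_2,v_3,s,t$, where $v_1,v_2,v_3$ commute, each has order $4$, and together generate $(\mathbb{Z}/4)^3$. The elements $s,t$ generate $D_8=\langle t,s\mid t^2=s^4=(ts)^2=1\rangle$, which acts on $(\mathbb{Z}/4)^3$ by conjugation. Writing $x^y=yxy^{-1}$, the action is $$v_1^t=v_3^{-1},\quad v_2^t=v_2^{-1},\quad v_1^s=v_2,\quad v_2^s=v_3,\quad v_3^s=v_2^{-1}v_1v_3.$$ So $S=(\mathbb{Z}/4)^3\rtimes D_8$ has order $2^9$. The group $\mathbb{Z}/2\wr\mathbb{Z}/2\wr\mathbb{Z}/2$ is the iterated wreath product, of order $2^7$; it is a Sylow $2$-subgroup of the symmetric group $S_8$. *)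

(* Defs.v *)
From mathcomp Require Import all_boot all_fingroup all_solvable.
Set Implicit Arguments.
Unset Strict Implicit.
Unset Printing Implicit Defensive.

(* The iterated wreath product Z/2 wr Z/2 wr Z/2, realized (as usual) as the
   automorphism group of the rooted binary tree of depth 3, acting on its 8
   leaves 'I_8 (leaf x has address given by the binary digits of x): the
   permutations of 'I_8 preserving the block systems {2k, 2k+1} and
   {4k, ..., 4k+3}.  This is the permutational iterated wreath product,
   of order 2^7 (a Sylow 2-subgroup of S_8). *)
Definition wreath222 : {set {perm 'I_8}} :=
  [set p : {perm 'I_8} | [forall x : 'I_8, forall y : 'I_8,
      ((x %/ 2 == y %/ 2) == (p x %/ 2 == p y %/ 2)) &&
      ((x %/ 4 == y %/ 4) == (p x %/ 4 == p y %/ 4))]].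

(* Main.v *)
Require Import Defs.
From mathcomp Require Import all_boot all_fingroup all_solvable.
From mathcomp Require Import zify.
Set Implicit Arguments. Unset Strict Implicit. Unset Printing Implicit Defensive.


Definition okl (l : seq nat) := [&& size l == 8, uniq l & all (fun n => n < 8) l].
Definition fn (l : seq nat) : 'I_8 -> 'I_8 :=
  if okl l then fun x : 'I_8 => inord (nth 0 l x) else id.
Lemma fn_inj l : injective (fn l).
Proof.
rewrite /fn; case ok: (okl l); last exact: inj_id; move: ok; rewrite /okl => /and3P[/eqP sz u al]; rewrite /injective => x y.
have lt n : n < 8 -> nth 0 l n < 8.
  by move=> h; apply: (allP al); rewrite mem_nth // sz.
move/(congr1 (@nat_of_ord _)); rewrite !inordK ?lt //.
by move/eqP; rewrite nth_uniq ?sz // => /eqP/val_inj.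
Qed.
Definition mkp l : {perm 'I_8} := perm (@fn_inj l).
Lemma mkpE l (x : 'I_8) : okl l -> nat_of_ord (mkp l x) = nth 0 l x.
Proof.
move=> ok; rewrite permE /fn ok inordK //.
move: ok; rewrite /okl => /and3P[/eqP sz u al]; apply: (allP al); by rewrite mem_nth // sz ltn_ord.
Qed.
Lemma mkpXE l (x : 'I_8) n : okl l -> nat_of_ord ((mkp l ^+ n)%g x) = iter n (nth 0 l) x.
Proof.
move=> ok; rewrite permX; elim: n => //= n IH; by rewrite mkpE // IH.
Qed.
Lemma forall_I8 (P : nat -> Prop) : (forall n, n < 8 -> P n) -> forall x : 'I_8, P x.
Proof. by move=> H x; apply: H. Qed.
Lemma all_I8 (P : nat -> bool) : all P (iota 0 8) -> forall n, n < 8 -> P n.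
Proof. by move=> /allP H n lt; apply: H; rewrite mem_iota. Qed.

Lemma I8_ind (P : nat -> Prop) (x : 'I_8) :
  P 0 -> P 1 -> P 2 -> P 3 -> P 4 -> P 5 -> P 6 -> P 7 -> P x.
Proof. by case: x => [[|[|[|[|[|[|[|[|n]]]]]]]]]. Qed.

Ltac permeq := apply/permP; let x := fresh "x" in intro x; apply: ord_inj;
  rewrite /= ?permM ?mkpE ?mkpXE ?perm1 //; pattern (nat_of_ord x);
  apply: I8_ind; vm_compute; reflexivity.

Definition la1 := [:: 0;1;2;3;6;7;5;4].
Definition la2 := [:: 2;3;1;0;4;5;6;7].
Definition la3 := [:: 0;1;2;3;7;6;4;5].
Definition lbs := [:: 4;5;6;7;0;1;3;2].
Definition lbt := [:: 0;1;3;2;4;5;6;7].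
Definition lbsi := [:: 4;5;7;6;0;1;2;3].
Definition a1 := mkp la1. Definition a2 := mkp la2. Definition a3 := mkp la3.
Definition bs := mkp lbs. Definition bt := mkp lbt. Definition bsi := mkp lbsi.

Lemma test : (a1 * a2 = a2 * a1)%g.
Proof. rewrite /a1 /a2. permeq. Qed.
Definition la2i := [:: 3;2;0;1;4;5;6;7].
Definition a2i := mkp la2i.
Local Open Scope group_scope.
Ltac pinv := apply/eqP; rewrite eq_invg_mul; apply/eqP; permeq.
Lemma bsV : bs^-1 = bsi. Proof. pinv. Qed.
Lemma bsiV : bsi^-1 = bs. Proof. pinv. Qed.
Lemma btV : bt^-1 = bt. Proof. pinv. Qed.
Lemma a1V : a1^-1 = a3. Proof. pinv. Qed.
Lemma a2V : a2^-1 = a2i. Proof. pinv. Qed.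
Lemma a3V : a3^-1 = a1. Proof. pinv. Qed.
Lemma a1X : a1 ^+ 4 = 1. Proof. permeq. Qed.
Lemma a2X : a2 ^+ 4 = 1. Proof. permeq. Qed.
Lemma a3X : a3 ^+ 4 = 1. Proof. permeq. Qed.
Lemma bsX : bs ^+ 4 = 1. Proof. permeq. Qed.
Lemma btX : bt ^+ 2 = 1. Proof. permeq. Qed.
Lemma c12 : commute a1 a2. Proof. rewrite /commute; permeq. Qed.
Lemma c13 : commute a1 a3. Proof. rewrite /commute; permeq. Qed.
Lemma c23 : commute a2 a3. Proof. rewrite /commute; permeq. Qed.
Lemma a13 : a1 * a3 = 1. Proof. permeq. Qed.
Lemma j1s : a1 ^ bsi = a2. Proof. rewrite conjgE bsiV; permeq. Qed.
Lemma j2s : a2 ^ bsi = a3. Proof. rewrite conjgE bsiV; permeq. Qed.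
Lemma j3s : a3 ^ bsi = a2i * a1 * a3. Proof. rewrite conjgE bsiV; permeq. Qed.
Lemma j1t : a1 ^ bt = a1. Proof. rewrite conjgE btV; permeq. Qed.
Lemma j2t : a2 ^ bt = a2i. Proof. rewrite conjgE btV; permeq. Qed.
Lemma j3t : a3 ^ bt = a3. Proof. rewrite conjgE btV; permeq. Qed.
Lemma jst : bs ^ bt = bsi. Proof. rewrite conjgE btV; permeq. Qed.

Local Close Scope group_scope.

Definition flip (n : nat) (b : bool) := if b then (if odd n then n.-1 else n.+1) else n.
Definition mk (t : seq nat) (x : nat) := flip (nth 0 t x./2) (odd x).
Definition Pw (t : seq nat) := all (fun x => all (fun y =>
   ((x %/ 2 == y %/ 2) == (mk t x %/ 2 == mk t y %/ 2)) &&
   ((x %/ 4 == y %/ 4) == (mk t x %/ 4 == mk t y %/ 4))) (iota 0 8)) (iota 0 8).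
Fixpoint tuples n : seq (seq nat) :=
  if n is n'.+1 then [seq x :: t | x <- iota 0 8, t <- tuples n'] else [:: [::]].
Lemma mem_tuples n t : size t = n -> all (fun x => x < 8) t -> t \in tuples n.
Proof.
elim: n t => [|n IH] [|x t] // [sz] /andP[xl tl].
change (x :: t \in [seq y :: u | y <- iota 0 8, u <- tuples n]).
by apply/allpairsPdep; exists x, t; rewrite mem_iota IH.
Qed.
Definition Lw := [seq t <- tuples 4 | Pw t].
Lemma size_Lw : size Lw = 128.
Proof. by vm_compute. Qed.

Lemma flip_lem m n : m %/ 2 = n %/ 2 -> m <> n -> m = flip n true.
Proof.
rewrite /flip => e ne; have := divn_eq m 2; have := divn_eq n 2.
rewrite !modn2; case: (odd n); case: (odd m) => /=; lia.
Qed.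

Definition enc (p : {perm 'I_8}) : seq nat :=
  [:: nat_of_ord (p (inord 0)); nat_of_ord (p (inord 2)); nat_of_ord (p (inord 4)); nat_of_ord (p (inord 6))].

Lemma W_mk p (x : 'I_8) : p \in wreath222 -> nat_of_ord (p x) = mk (enc p) x.
Proof.
rewrite inE => /forallP Hp.
have ey : (x./2).*2 < 8 by rewrite halfK (leq_ltn_trans (leq_subr _ _) (ltn_ord x)).
have key : nth 0 (enc p) x./2 = p (inord (x./2).*2).
  by case: x {ey Hp} => [[|[|[|[|[|[|[|[|n]]]]]]]]].
rewrite /mk key; set y : 'I_8 := inord _.
have yv : nat_of_ord y = (x./2).*2 by rewrite inordK.
case ox: (odd x).
  apply: flip_lem.
    move: (Hp x) => /forallP/(_ y) /andP[/eqP e _].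
    apply/eqP; rewrite -e yv halfK ox; apply/eqP; lia.
  move=> /ord_inj /perm_inj /(congr1 (@nat_of_ord _)); rewrite yv halfK ox; lia.
by congr (nat_of_ord (p _)); apply: ord_inj; rewrite yv even_halfK ?ox.
Qed.

Lemma W_Pw p : p \in wreath222 -> Pw (enc p).
Proof.
move=> pW; have := pW; rewrite inE => /forallP Hp.
apply/allP => x; rewrite mem_iota => /andP[_ xl]; apply/allP => y; rewrite mem_iota => /andP[_ yl].
move: (Hp (Ordinal xl)) => /forallP/(_ (Ordinal yl)).
by rewrite !W_mk.
Qed.

Lemma card_W : #|wreath222| <= 128.
Proof.
rewrite -size_Lw cardE -(size_map enc); apply: uniq_leq_size.
  rewrite map_inj_in_uniq ?enum_uniq // => p q; rewrite !mem_enum => pW qW e.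
  apply/permP => x; apply: ord_inj; by rewrite !W_mk // e.
move=> t /mapP[p]; rewrite mem_enum => pW ->.
rewrite mem_filter W_Pw //; apply: mem_tuples => //=.
by rewrite !ltn_ord.
Qed.

Lemma W_group : group_set wreath222.
Proof.
apply/andP; split.
  rewrite inE; apply/forallP => x; apply/forallP => y; by rewrite !perm1 !eqxx.
apply/subsetP => r /mulsgP[p q]; rewrite !inE => /forallP Hp /forallP Hq ->.
apply/forallP => x; apply/forallP => y; rewrite !permM.
move: (Hp x) => /forallP/(_ y)/andP[/eqP -> /eqP ->].
by move: (Hq (p x)) => /forallP/(_ (p y)).
Qed.

Lemma mkp_W l : okl l -> all (fun x => all (fun y =>
   ((x %/ 2 == y %/ 2) == (nth 0 l x %/ 2 == nth 0 l y %/ 2)) &&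
   ((x %/ 4 == y %/ 4) == (nth 0 l x %/ 4 == nth 0 l y %/ 4))) (iota 0 8)) (iota 0 8) ->
  mkp l \in wreath222.
Proof.
move=> ok /allP H; rewrite inE; apply/forallP => x; apply/forallP => y.
rewrite !mkpE //; move: (H x); rewrite mem_iota ltn_ord => /(_ isT) /allP/(_ y).
by rewrite mem_iota ltn_ord => /(_ isT).
Qed.

Lemma a1W : a1 \in wreath222. Proof. by apply: mkp_W; vm_compute. Qed.
Lemma a2W : a2 \in wreath222. Proof. by apply: mkp_W; vm_compute. Qed.
Lemma a3W : a3 \in wreath222. Proof. by apply: mkp_W; vm_compute. Qed.
Lemma bsW : bs \in wreath222. Proof. by apply: mkp_W; vm_compute. Qed.
Lemma btW : bt \in wreath222. Proof. by apply: mkp_W; vm_compute. Qed.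

Local Open Scope group_scope.
Definition gp (c : nat * nat * nat * nat) : {perm 'I_8} :=
  let: (i, j, k, l) := c in a1 ^+ i * a2 ^+ j * bs ^+ k * bt ^+ l.
Definition hn (c : nat * nat * nat * nat) (x : nat) : nat :=
  let: (i, j, k, l) := c in
  iter l (nth 0 lbt) (iter k (nth 0 lbs) (iter j (nth 0 la2) (iter i (nth 0 la1) x))).
Definition cs : seq (nat * nat * nat * nat) :=
  [seq (c, l) | c <- [seq (c, k) | c <- [seq (i, j) | i <- iota 0 4, j <- iota 0 4],
                                     k <- iota 0 4], l <- iota 0 2].
Lemma size_cs : size cs = 128. Proof. by vm_compute. Qed.
Lemma uniq_gp : uniq (map gp cs).
Proof.
apply: (@map_uniq _ _ (fun p : {perm 'I_8} => [seq nat_of_ord (p (inord n)) | n <- iota 0 8])).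
rewrite -map_comp (@eq_map _ _ _ (fun c => [seq hn c n | n <- iota 0 8])); last first.
  move=> [[[i j] k] l]; apply/eq_in_map => n; rewrite mem_iota => /andP[_ nl] /=.
  by rewrite !permM !mkpXE // inordK.
by vm_compute.
Qed.

Local Close Scope group_scope.
Local Open Scope group_scope.

Lemma gen_sub_closed (gT : finGroupType) (X B : {set gT}) :
  1 \in B -> (forall x y, x \in B -> y \in B -> x * y \in B) ->
  X \subset B -> <<X>> \subset B.
Proof.
move=> B1 BM sXB.
have gB : group_set B.
  apply/andP; split=> //; apply/subsetP => z /mulsgP[x y Bx By ->]; exact: BM.
by rewrite (gen_subG _ (Group gB)).
Qed.

Lemma morph_act_gen (gT rT : finGroupType) (K H : {group gT}) (X Y : {set gT})
   (fK : {morphism K >-> rT}) (fH : {morphism H >-> rT}) :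
  H \subset 'N(K) -> K = <<X>> :> {set gT} -> H \subset <<Y>> -> X \subset K -> Y \subset H ->
  (forall x a, x \in X -> a \in Y -> fK (x ^ a) = fK x ^ fH a) ->
  {in K & H, morph_act 'J 'J fK fH}.
Proof.
move=> nKH defK sHY sXK sYH hyp.
have KJ x a : x \in K -> a \in H -> x ^ a \in K.
  by move=> xK aH; rewrite memJ_norm // (subsetP nKH).
pose A := [set a in H | [forall x in K, fK (x ^ a) == fK x ^ fH a]].
have sYA : Y \subset A.
  apply/subsetP => a aY; have aH := subsetP sYH a aY.
  rewrite inE aH /=; apply/forall_inP => x xK; apply/eqP.
  pose B := [set x in K | fK (x ^ a) == fK x ^ fH a].
  suff : K \subset B by move/subsetP/(_ x xK); rewrite inE => /andP[_ /eqP].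
  rewrite defK; apply: gen_sub_closed.
  - by rewrite inE group1 conj1g !morph1 conj1g eqxx.
  - move=> y z; rewrite !inE => /andP[yK /eqP ey] /andP[zK /eqP ez].
    by rewrite groupM //= conjMg morphM ?KJ // ey ez morphM // conjMg eqxx.
  - apply/subsetP => y yX; rewrite inE (subsetP sXK) //= hyp //.
have sHA : H \subset A.
  apply: subset_trans sHY _; apply: gen_sub_closed => //.
  - rewrite inE group1 /=; apply/forall_inP => x xK; by rewrite conjg1 !morph1 conjg1.
  - move=> a b; rewrite !inE => /andP[aH /forall_inP ea] /andP[bH /forall_inP eb].
    rewrite groupM //=; apply/forall_inP => x xK.
    rewrite conjgM (eqP (eb _ (KJ _ _ xK aH))) (eqP (ea _ xK)) morphM // conjgM.
    by rewrite eqxx.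
move=> x a xK aH /=.
by move: (subsetP sHA a aH); rewrite inE => /andP[_ /forall_inP/(_ x xK)/eqP].
Qed.

Lemma arithV k x12 x3 : (4 * 4 = k * x12 -> k * 4 = 64 * x3 -> 0 < x12 -> 0 < x3 -> x12 = 1 /\ x3 = 1)%N.
Proof.
move=> e1 e2 p1 p2; have hk : (k = 16 * x3)%N by lia.
subst k; have : (x3 * x12 = 1)%N by nia.
by move/eqP; rewrite muln_eq1 => /andP[/eqP-> /eqP->].
Qed.
Lemma arithD a b x : (a * b = 8 * x -> a <= 4 -> b <= 2 -> 0 < x -> [/\ a = 4, b = 2 & x = 1])%N.
Proof.
move=> + la lb x0; move: la lb.
by case: a => [|[|[|[|[|a]]]]]; case: b => [|[|[|b]]] //= _ _; split; lia.
Qed.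

Local Open Scope group_scope.

Theorem lemma2p1 (gT : finGroupType) (S : {group gT}) (v1 v2 v3 s t : gT) :
  commute v1 v2 -> commute v1 v3 -> commute v2 v3 ->
  #[v1]%g = 4 -> #[v2]%g = 4 -> #[v3]%g = 4 ->
  #|<<[set v1; v2; v3]>>%g| = 64 ->
  (t ^+ 2 = 1)%g -> (s ^+ 4 = 1)%g -> ((t * s) ^+ 2 = 1)%g ->
  #|<<[set s; t]>>%g| = 8 ->
  (t * v1 * t^-1 = v3^-1)%g ->
  (t * v2 * t^-1 = v2^-1)%g ->
  (s * v1 * s^-1 = v2)%g ->
  (s * v2 * s^-1 = v3)%g ->
  (s * v3 * s^-1 = v2^-1 * v1 * v3)%g ->
  (<<[set v1; v2; v3]>> ><| <<[set s; t]>> = S)%g ->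
  [/\ cyclic <[(v1 * v3)%g]>%g, #[(v1 * v3)%g]%g = 4,
      (<[(v1 * v3)%g]> <| S)%g
    & (S / <[(v1 * v3)%g]>)%g \isog wreath222].
Proof.
move=> cv12 cv13 cv23 o1 o2 o3 oV t2 s4 ts2 oD tv1 tv2 sv1 sv2 sv3 defS.
set V := <<[set v1; v2; v3]>> in oV defS *.
set D := <<[set s; t]>> in oD defS *.
have tV : t^-1 = t by apply/eqP; rewrite eq_invg_mul; move: t2; rewrite expgS expg1 => ->.
have tst : t * s * t = s^-1.
  apply/eqP; rewrite eq_mulgV1 invgK; apply/eqP.
  by move: ts2; rewrite expgS expg1 !mulgA.
have eSt : s ^ t = s^-1 by rewrite conjgE tV mulgA.
have e1s : v1 ^ s^-1 = v2 by rewrite conjgE invgK mulgA.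
have e2s : v2 ^ s^-1 = v3 by rewrite conjgE invgK mulgA.
have e3s : v3 ^ s^-1 = v2^-1 * v1 * v3 by rewrite conjgE invgK mulgA.
have e1t : v1 ^ t = v3^-1 by rewrite conjgE tV -{2}tV mulgA.
have e2t : v2 ^ t = v2^-1 by rewrite conjgE tV -{2}tV mulgA.
have e3t : v3 ^ t = v1^-1.
  have : (v1 ^ t) ^ t = v1 by move: t2; rewrite -conjgM expgS expg1 => ->; rewrite conjg1.
  by rewrite e1t conjVg => <-; rewrite invgK.

have os : #[s] %| 4 by rewrite order_dvdn s4.
have ot : #[t] %| 2 by rewrite order_dvdn t2.
have nst : <[t]> \subset 'N(<[s]>).
  by rewrite cycle_subG; apply/normP; rewrite -cycleJ eSt cycleV.
have joinD : <[s]> <*> <[t]> = D.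
  apply/eqP; rewrite eqEsubset join_subG !cycle_subG !mem_gen ?inE ?eqxx ?orbT //=.
  rewrite gen_subG; apply/subsetP => x; rewrite !inE => /orP[]/eqP->.
    exact: (subsetP (joing_subl _ _)) _ (cycle_id s).
  exact: (subsetP (joing_subr _ _)) _ (cycle_id t).
have mulD : <[s]> * <[t]> = D by rewrite -norm_joinEr.
have cardD := mul_cardG <[s]> <[t]>.
rewrite mulD oD -!orderE in cardD.
have ls : #[s] <= 4 := @dvdn_leq _ 4 isT os.
have lt : #[t] <= 2 := @dvdn_leq _ 2 isT ot.
have i1 : 0 < #|<[s]>%G :&: <[t]>%G| := cardG_gt0 (<[s]> :&: <[t]>)%G.
have [os4 ot2 iD] := arithD cardD ls lt i1.
have tiD : <[s]> :&: <[t]> = 1.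
  by apply/eqP; rewrite (trivg_card1 (<[s]> :&: <[t]>)%G) iD.
have defD : <[s]> ><| <[t]> = D by rewrite sdprodE.
have dbs : #[bs] %| #[s] by rewrite os4 order_dvdn bsX.
have dbt : #[bt] %| #[t] by rewrite ot2 order_dvdn btX.
pose fs := eltm_morphism dbs. pose ft := eltm_morphism dbt.
have fss : fs s = bs := eltm_id dbs.
have ftt : ft t = bt := eltm_id dbt.
have actD : {in <[s]> & <[t]>, morph_act 'J 'J fs ft}.
  apply: (@morph_act_gen _ _ _ _ [set s] [set t]) => //.
  - by rewrite sub1set cycle_id.
  - by rewrite sub1set cycle_id.
  move=> x a; rewrite !inE => /eqP-> /eqP->.
  rewrite eSt morphV ?cycle_id //.
  change ((fs s)^-1 = (fs s) ^ (ft t)); by rewrite fss ftt bsV jst.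
pose fD := sdprodm_morphism defD actD.
have fDs : fD s = bs by rewrite -fss; exact: sdprodmEl (cycle_id _).
have fDt : fD t = bt by rewrite -ftt; exact: sdprodmEr (cycle_id _).

have cK12 : <[v2]> \subset 'C(<[v1]>).
  by rewrite cycle_subG /= cent_cycle; apply/cent1P; apply: commute_sym.
pose K12 := (<[v1]> <*> <[v2]>)%G.
have mul12 : <[v1]> * <[v2]> = K12 by rewrite /= cent_joinEr.
have v1K : v1 \in K12 by apply: (subsetP (joing_subl _ _)); apply: cycle_id.
have v2K : v2 \in K12 by apply: (subsetP (joing_subr _ _)); apply: cycle_id.
have cK3 : <[v3]> \subset 'C(K12).
  rewrite cycle_subG -sub_cent1 join_subG !cycle_subG.
  by apply/andP; split; apply/cent1P.
have v1V : v1 \in V by rewrite mem_gen // !inE eqxx.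
have v2V : v2 \in V by rewrite mem_gen // !inE eqxx ?orbT.
have v3V : v3 \in V by rewrite mem_gen // !inE eqxx ?orbT.
have joinV : K12 <*> <[v3]> = V.
  apply/eqP; rewrite eqEsubset join_subG !cycle_subG v3V join_subG !cycle_subG v1V v2V /=.
  rewrite gen_subG; apply/subsetP => x; rewrite !inE => /orP[/orP[/eqP->|/eqP->]|/eqP->].
  - exact: (subsetP (joing_subl _ _)).
  - exact: (subsetP (joing_subl _ _)).
  exact: (subsetP (joing_subr _ _)) _ (cycle_id v3).
have mulV : K12 * <[v3]> = V by rewrite -cent_joinEr.
have card12 := mul_cardG <[v1]> <[v2]>.
rewrite mul12 -!orderE o1 o2 in card12.
have cardV := mul_cardG K12 <[v3]>.
rewrite mulV oV -orderE o3 in cardV.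
have i12 : 0 < #|<[v1]>%G :&: <[v2]>%G| := cardG_gt0 (<[v1]> :&: <[v2]>)%G.
have i3 : 0 < #|K12 :&: <[v3]>%G| := cardG_gt0 (K12 :&: <[v3]>)%G.
have [c12' c3'] := arithV card12 cardV i12 i3.
have ti12 : <[v1]> :&: <[v2]> = 1.
  by apply/eqP; rewrite (trivg_card1 (<[v1]> :&: <[v2]>)%G) c12'.
have ti3 : K12 :&: <[v3]> = 1.
  by apply/eqP; rewrite (trivg_card1 (K12 :&: <[v3]>)%G) c3'.
have d12 : <[v1]> \x <[v2]> = K12 by rewrite dprodE.
have d3 : K12 \x <[v3]> = V by rewrite dprodE.

have d1 : #[a1] %| #[v1] by rewrite o1 order_dvdn a1X.
have d2 : #[a2] %| #[v2] by rewrite o2 order_dvdn a2X.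
have d3' : #[a3] %| #[v3] by rewrite o3 order_dvdn a3X.
pose f1 := eltm_morphism d1. pose f2 := eltm_morphism d2. pose f3 := eltm_morphism d3'.
have cf12 : f2 @* <[v2]> \subset 'C(f1 @* <[v1]>).
  by rewrite !im_eltm cycle_subG /= cent_cycle; apply/cent1P; apply: commute_sym; apply: c12.
pose f12 := dprodm_morphism d12 cf12.
have cf3 : f3 @* <[v3]> \subset 'C(f12 @* K12).
  rewrite im_eltm im_dprodm !im_eltm centM subsetI !cycle_subG /= !cent_cycle.
  by apply/andP; split; apply/cent1P; apply: commute_sym; [apply: c13 | apply: c23].
pose fV := dprodm_morphism d3 cf3.
have fV1 : fV v1 = a1.
  transitivity (f12 v1); first exact: dprodmEl.
  transitivity (f1 v1); first exact: dprodmEl (cycle_id _).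
  exact: eltm_id.
have fV2 : fV v2 = a2.
  transitivity (f12 v2); first exact: dprodmEl.
  transitivity (f2 v2); first exact: dprodmEr (cycle_id _).
  exact: eltm_id.
have fV3 : fV v3 = a3.
  transitivity (f3 v3); first exact: dprodmEr (cycle_id _).
  exact: eltm_id.

have sD : s \in D by rewrite mem_gen // !inE eqxx.
have tD : t \in D by rewrite mem_gen // !inE eqxx ?orbT.
have fDsi : fD s^-1 = bsi.
  by transitivity ((fD s)^-1); [exact: morphV | rewrite fDs bsV].
have [nVS DS mulS nVD tiS] := sdprod_context defS.
have VS := normal_sub nVS.
have HV : forall x a, x \in [set v1; v2; v3] -> a \in [set s^-1; t] ->
    fV (x ^ a) = fV x ^ fD a.
  move=> x a; rewrite !inE => /orP[/orP[/eqP->|/eqP->]|/eqP->] /orP[/eqP->|/eqP->].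
  - by rewrite e1s fV1 fV2 fDsi j1s.
  - by rewrite e1t morphV // fV1 fV3 fDt a3V j1t.
  - by rewrite e2s fV2 fV3 fDsi j2s.
  - by rewrite e2t morphV // fV2 fDt a2V j2t.
  - by rewrite e3s !morphM ?groupM ?groupV // morphV // fV1 fV2 fV3 fDsi a2V j3s.
  by rewrite e3t morphV // fV1 fV3 fDt a1V j3t.
have actV : {in V & D, morph_act 'J 'J fV fD}.
  apply: (@morph_act_gen _ _ _ _ [set v1; v2; v3] [set s^-1; t]) => //.
  - rewrite gen_subG; apply/subsetP => x; rewrite !inE => /orP[]/eqP->.
      by rewrite -groupV mem_gen // !inE eqxx.
    by rewrite mem_gen // !inE eqxx ?orbT.
  - exact: subset_gen.
  - by apply/subsetP => x; rewrite !inE => /orP[]/eqP->; rewrite ?groupV.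
pose f := sdprodm_morphism defS actV.
have fv1 : f v1 = a1 by rewrite -fV1; exact: sdprodmEl.
have fv2 : f v2 = a2 by rewrite -fV2; exact: sdprodmEl.
have fv3 : f v3 = a3 by rewrite -fV3; exact: sdprodmEl.
have fs' : f s = bs by rewrite -fDs; exact: sdprodmEr.
have ft' : f t = bt by rewrite -fDt; exact: sdprodmEr.

have v1S : v1 \in S := subsetP VS _ v1V.
have v2S : v2 \in S := subsetP VS _ v2V.
have v3S : v3 \in S := subsetP VS _ v3V.
have sS : s \in S := subsetP DS _ sD.
have tS : t \in S := subsetP DS _ tD.
pose WG := Group W_group.
have imW : f @* S \subset wreath222.
  apply/subsetP => y /morphimP[x _ xS ->].
  suff : S \subset [set x in S | f x \in wreath222].
    by move/subsetP/(_ x xS)/setIdP => [_].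
  have sSg : S \subset <<[set v1; v2; v3] :|: [set s; t]>>.
    by rewrite -mulS mul_subG // genS // ?subsetUl ?subsetUr.
  apply: subset_trans sSg _; apply: gen_sub_closed.
  - by apply/setIdP; split; [exact: group1 | rewrite morph1; exact: (group1 WG)].
  - move=> x1 x2 /setIdP[x1S fx1] /setIdP[x2S fx2]; apply/setIdP; split.
      exact: groupM.
    rewrite morphM //; exact: (@groupM _ WG _ _ fx1 fx2).
  apply/subsetP => g /setUP[/setUP[/setU1P[->|/set1P->]|/set1P->]|/set2P[]->];
    apply/setIdP; split => //.
  - by rewrite fv1; exact: a1W.
  - by rewrite fv2; exact: a2W.
  - by rewrite fv3; exact: a3W.
  - by rewrite fs'; exact: bsW.
  by rewrite ft'; exact: btW.
have img : {subset map gp cs <= f @* S}.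
  move=> y /mapP[[[[i j] k] l] _ ->].
  have Xi : v1 ^+ i * v2 ^+ j * s ^+ k * t ^+ l \in S by rewrite !groupM ?groupX.
  have e : f (v1 ^+ i * v2 ^+ j * s ^+ k * t ^+ l) = a1 ^+ i * a2 ^+ j * bs ^+ k * bt ^+ l.
    by rewrite !morphM ?groupM ?groupX // !morphX // fv1 fv2 fs' ft'.
  by rewrite /= -e mem_morphim.
have cardIm : 128 <= #|f @* S|.
  rewrite -size_cs -(size_map gp) -(card_uniqP uniq_gp).
  by apply: subset_leq_card; apply/subsetP.
have imEq : f @* S = wreath222.
  by apply/eqP; rewrite eqEcard imW (leq_trans card_W cardIm).
have z4 : (v1 * v3) ^+ 4 = 1.
  by rewrite expgMn // -{1}o1 -o3 !expg_order mulg1.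
have z2 : (v1 * v3) ^+ 2 != 1.
  rewrite expgMn // -eq_invg_mul; apply/negP => /eqP e.
  have : v1 ^+ 2 \in K12 :&: <[v3]>.
    by rewrite inE groupX //= -[v1 ^+ 2]invgK e groupV mem_cycle.
  rewrite ti3 => /set1P/eqP; rewrite -order_dvdn o1.
  by [].
have oz : #[v1 * v3] = 4.
  have d4 : #[v1 * v3] %| 4 by rewrite order_dvdn z4.
  have nd2 : ~~ (#[v1 * v3] %| 2) by rewrite order_dvdn.
  have le4 := @dvdn_leq _ 4 isT d4.
  move: d4 nd2 le4 (order_gt0 (v1 * v3)).
  by case: #[_] => [|[|[|[|[|n]]]]].
have zS : v1 * v3 \in S by rewrite groupM.
have kz : v1 * v3 \in 'ker f by apply/kerP => //; rewrite morphM // fv1 fv3 a13.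
have cardS : #|S| = 512 by rewrite -(sdprod_card defS) oV oD.
have kS : 'ker f \subset S by rewrite kerE; apply: subsetIl.
have cardK : #|'ker f| = 4.
  have cIm : #|f @* S| = 128.
    by apply/eqP; rewrite eqn_leq cardIm andbT imEq card_W.
  have cm := card_morphim f S; rewrite setIid cIm in cm.
  have := Lagrange kS; rewrite -cm cardS => h.
  by apply/eqP; rewrite -(@eqn_pmul2r 128) // h.
have kerEq : 'ker f = <[v1 * v3]>.
  apply/eqP; rewrite eq_sym eqEcard cycle_subG kz /=.
  by rewrite cardK -orderE oz.
split.
- exact: cycle_cyclic.
- exact: oz.
- by rewrite -kerEq ker_normal.
by rewrite -kerEq -imEq first_isog.
Qed.
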